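(* Let $\mathcal{A}$ be an order--invariant oblivious streaming algorithm that, for any $\epsilon\in(0,1)$ and $\delta\in(0,1)$, uses $M(\epsilon,\delta)$ space and, on any fixed stream of at most $m$ updates, outputs a correct solution to the $(f,\epsilon)$--estimation problem with probability at least $1-\delta$. Then for any $\epsilon\in(0,1)$ and $\delta\in(0,1)$ there is a robust streaming algorithm for the $(f,\epsilon)$--estimation problem in the $\tau$--Stream Adversary Model that succeeds with probability at least $1-\delta$ and uses $M(\epsilon,\delta/m^\tau)$ space. The space of this robust algorithm can also be bounded by $O(\tau\log m+\log(1/\delta))\cdot M(\epsilon,1/10)$.
   Context: Fix $n,m$, an integer $\alpha\ge 2$ and $f:\mathbb{Z}^n\to\{0\}\cup[1,\alpha]$. For $x,y\ge0$, $y$ is a $(1+\epsilon)$--multiplicative approximation to $x$ if $x\le y<(1+\epsilon)x$; the $(f,\epsilon)$--estimation problem on $v\in\mathbb{Z}^n$ asks for such an approximation to $f(v)$. A stream of updates is a sequence $(i_j,\Delta_j)\in[n]\times\{-1,1\}$, accumulating into the frequency vector $v^{(j)}$ with $v^{(j)}_i=\sum_{j'\le j,\,i_{j'}=i}\Delta_{j'}$. An oblivious streaming algorithm is given $\epsilon$ and an upper bound $m$ on the stream length, processes $t\le m$ updates one by one, and then outputs a solution to the $(f,\epsilon)$--estimation problem on $v^{(t)}$. Such an algorithm with random seed $\rho$ is order--invariant if for any two streams $S_1,S_2$ of length at most $m$ that accumulate to the same frequency vector, and any seed $\rho$, its memory state after processing $S_1$ with seed $\rho$ equals its memory state after processing $S_2$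 with seed $\rho$. $\tau$--Stream Adversary Model (for a positive integer $\tau$): a game of $m$ rounds between an Adversary and an Algorithm; in each round the Adversary sends an update and the Algorithm replies with an estimate $y_j$. The Adversary has unlimited memory and may record the whole history, but before round 1 it fixes a first update and $\tau$ streams of $m-1$ updates each; in round 1 it sends the first update, and in each round $2,\dots,m$ it chooses (arbitrarily, based on all information so far including the latest estimate) one of the $\tau$ streams, removes its first remaining update and sends it. The Algorithm succeeds if for every $j\in[m]$, $y_j$ is a $(1+\epsilon)$--multiplicative approximation to $f(v^{(j)})$. *)

(* Defs.v *)
From HB Require Import structures.
From mathcomp Require Import all_boot all_order all_algebra.
From mathcomp Require Import reals exp.
Set Implicit Arguments. Unset Strict Implicit. Unset Printing Implicit Defensive.
Import Order.TTheory GRing.Theory Num.Theory.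
Local Open Scope ring_scope.

(* An update (i, Delta) with i in [n], Delta in {-1,1}: the boolean is
   true for Delta = +1 and false for Delta = -1. *)
Definition update (n : nat) := ('I_n * bool)%type.

Definition freq (n : nat) (s : seq (update n)) : {ffun 'I_n -> int} :=
  [ffun i => \sum_(u <- s | u.1 == i) (if u.2 then 1 else -1)].

Definition approx (R : realType) (eps x y : R) : bool :=
  (x <= y) && (y < (1 + eps) * x).

(* A (randomized) streaming algorithm: a finite seed space (uniform
   distribution), a finite memory-state space, an initial memory state
   determined by the seed, a deterministic update map on memory states and an
   estimate read off the memory state. *)
Record alg (R : realType) (n : nat) := Alg {
  seed : finType;
  state : finType;
  init : seed -> state;
  upd : state -> update n -> state;
  out : state -> R }.

Definition mem_bits (R : realType) (n : nat) (A : alg R n) : nat :=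
  up_log 2 #|state A|.

Definition run (R : realType) (n : nat) (A : alg R n) (rho : seed A)
  (s : seq (update n)) : state A :=
  foldl (@upd R n A) (init rho) s.

Definition Pr (R : realType) (n : nat) (A : alg R n) (P : pred (seed A)) : R :=
  #|[set rho | P rho]|%:R / #|seed A|%:R.

Definition order_invariant (R : realType) (n m : nat) (A : alg R n) : Prop :=
  forall (rho : seed A) (s1 s2 : seq (update n)),
    (size s1 <= m)%N -> (size s2 <= m)%N -> freq s1 = freq s2 ->
    run rho s1 = run rho s2.

Definition oblivious_correct (R : realType) (n m : nat)
  (f : {ffun 'I_n -> int} -> R) (eps delta : R) (A : alg R n) : Prop :=
  forall s : seq (update n), (size s <= m)%N ->
    1 - delta <= Pr (fun rho : seed A => approx eps (f (freq s)) (out (run rho s))).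

(* A (deterministic) adversary consists of a
   first update u0, tau streams of m-1 updates each, and a strategy choosing,
   based on the estimates received so far, which stream to advance next.
   [play_aux] produces the transcript of (update, estimate) pairs of the
   remaining k rounds, given the current memory state, the number of updates
   already consumed from each stream, and the estimates so far. *)
Fixpoint play_aux (R : realType) (n m tau : nat) (A : alg R n)
  (u0 : update n) (streams : 'I_tau -> (m.-1).-tuple (update n))
  (strat : seq R -> 'I_tau)
  (k : nat) (s : state A) (ptr : 'I_tau -> nat) (ys : seq R)
  : seq (update n * R) :=
  match k with
  | 0 => [::]
  | k'.+1 =>
      let i := strat ys in
      let u := nth u0 (streams i) (ptr i) in
      let s' := upd s u in
      let y := out s' in
      (u, y) :: play_aux u0 streams strat k' s'
                  (fun j => if j == i then (ptr j).+1 else ptr j) (rcons ys y)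
  end.

Definition transcript (R : realType) (n m tau : nat) (A : alg R n)
  (u0 : update n) (streams : 'I_tau -> (m.-1).-tuple (update n))
  (strat : seq R -> 'I_tau) (rho : seed A) : seq (update n * R) :=
  match m with
  | 0 => [::]
  | m'.+1 =>
      let s1 := upd (init rho) u0 in
      let y1 := out s1 in
      (u0, y1) :: play_aux u0 streams strat m' s1 (fun _ => 0%N) [:: y1]
  end.

Definition game_success (R : realType) (n : nat) (f : {ffun 'I_n -> int} -> R)
  (eps : R) (tr : seq (update n * R)) : bool :=
  all (fun j => approx eps (f (freq (take j.+1 (map fst tr))))
                            (nth 0 (map snd tr) j))
      (iota 0 (size tr)).

Definition robust (R : realType) (n m tau : nat) (f : {ffun 'I_n -> int} -> R)
  (eps delta : R) (A : alg R n) : Prop :=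
  forall (u0 : update n) (streams : 'I_tau -> (m.-1).-tuple (update n))
         (strat : seq R -> 'I_tau),
    1 - delta <= Pr (fun rho : seed A => game_success f eps (transcript u0 streams strat rho)).

(* Main.v *)
Require Import Defs.
From HB Require Import structures.
From mathcomp Require Import all_boot all_order all_algebra.
From mathcomp Require Import reals exp zify ring lra.
Set Implicit Arguments. Unset Strict Implicit. Unset Printing Implicit Defensive.
Import Order.TTheory GRing.Theory Num.Theory.
Local Open Scope ring_scope.

Definition sc (n tau m' : nat) (u0 : update n)
  (streams : 'I_tau -> m'.-tuple (update n)) (ptr : 'I_tau -> nat) : seq (update n) :=
  u0 :: flatten [seq [seq nth u0 (streams i) j | j <- iota 0 (ptr i)] | i <- enum 'I_tau].

Lemma sc_ext n tau m' u0 (streams : 'I_tau -> m'.-tuple (update n)) p1 p2 :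
  (forall i, p1 i = p2 i) -> sc u0 streams p1 = sc u0 streams p2.
Proof. by move=> h; rewrite /sc; congr (_ :: flatten _); apply: eq_map => i; rewrite h. Qed.

Lemma size_sc n tau m' u0 (streams : 'I_tau -> m'.-tuple (update n)) p :
  size (sc u0 streams p) = (\sum_i p i).+1.
Proof.
rewrite /= size_flatten /shape -map_comp sumnE big_map big_enum /=.
by congr _.+1; apply: eq_bigr => i _; rewrite /= size_map size_iota.
Qed.

Lemma sum_incr tau (p : 'I_tau -> nat) i0 :
  (\sum_j (if j == i0 then (p j).+1 else p j) = (\sum_j p j).+1)%N.
Proof.
rewrite (bigD1 i0) //= eqxx [in RHS](bigD1 i0) //= addSn; congr (_.+1 + _)%N.
by apply: eq_bigr => j /negPf ->.
Qed.

Lemma sc_incr n tau m' u0 (streams : 'I_tau -> m'.-tuple (update n)) p i0 :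
  perm_eq (sc u0 streams (fun j => if j == i0 then (p j).+1 else p j))
          (rcons (sc u0 streams p) (nth u0 (streams i0) (p i0))).
Proof.
apply/permP => a; rewrite -cats1 count_cat /= !count_flatten -!map_comp !sumnE !big_map.
rewrite -!enumT !big_enum /= (bigD1 i0) //= [in RHS](bigD1 i0) //= eqxx.
rewrite -addn1 iotaD map_cat count_cat /= add0n addn0.
have -> : (\sum_(i | i != i0) count a [seq nth u0 (streams i) j | j <- iota 0 (if i == i0 then (p i).+1 else p i)] =
   \sum_(i | i != i0) count a [seq nth u0 (streams i) j | j <- iota 0 (p i)])%N.
  by apply: eq_bigr => j /negPf ->.
by rewrite -!addnA; congr (_ + (_ + _))%N; rewrite addnC.
Qed.

Lemma run_rcons (R : realType) n (B : alg R n) rho h u :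
  run rho (rcons h u) = @upd R n B (run rho h) u.
Proof. by rewrite /run foldl_rcons. Qed.

Definition Qp (R : realType) n tau m' (B : alg R n) (rho : seed B) u0
   (streams : 'I_tau -> m'.-tuple (update n)) (m : nat) (p : seq (update n)) (y : R) :=
  y = out (run rho p) /\ exists ptr, perm_eq p (sc u0 streams ptr) /\ (\sum_i ptr i < m)%N.

Lemma play_inv (R : realType) n m tau (B : alg R n) u0
  (streams : 'I_tau -> (m.-1).-tuple (update n)) strat (rho : seed B) :
  forall k s ptr ys h, s = run rho h -> perm_eq h (sc u0 streams ptr) ->
  (\sum_i ptr i + k < m)%N ->
  forall j, (j < size (@play_aux R n m tau B u0 streams strat k s ptr ys))%N ->
  Qp rho u0 streams m (h ++ take j.+1 (map fst (@play_aux R n m tau B u0 streams strat k s ptr ys)))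
     (nth 0 (map snd (@play_aux R n m tau B u0 streams strat k s ptr ys)) j).
Proof.
elim=> [//|k IH] s ptr ys h hs hp hk j /=.
set i := strat ys.
set u := nth u0 (streams i) (ptr i).
have hs' : upd s u = run rho (rcons h u) by rewrite run_rcons hs.
have hp' : perm_eq (rcons h u) (sc u0 streams (fun j => if j == i then (ptr j).+1 else ptr j)).
  by rewrite perm_sym (permPl (sc_incr _ _ _ _)) -!cats1 perm_cat2r perm_sym.
have hsum := sum_incr ptr i.
case: j => [_|j hj].
  rewrite /Qp /= take0 cats1; split; first by rewrite hs'.
  eexists; split; first exact: hp'.
  by rewrite hsum; lia.
rewrite -cat_rcons; apply: IH => //.
by rewrite hsum; lia.
Qed.

Lemma Qp_ok (R : realType) n m tau (B : alg R n) f eps u0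
  (streams : 'I_tau -> (m.-1).-tuple (update n)) (rho : seed B) p y :
  order_invariant m B ->
  (forall ptr, (\sum_i ptr i < m)%N ->
     approx eps (f (freq (sc u0 streams ptr))) (out (run rho (sc u0 streams ptr)))) ->
  Qp rho u0 streams m p y -> approx eps (f (freq p)) y.
Proof.
move=> oi hG [-> [ptr [hp hs]]].
have hsz : size p = (\sum_i ptr i).+1 by rewrite (perm_size hp) size_sc.
have hf : freq p = freq (sc u0 streams ptr).
  by apply/ffunP => i; rewrite !ffunE; apply: perm_big.
rewrite hf (oi rho p (sc u0 streams ptr)) ?size_sc ?hsz //.
exact: hG.
Qed.

Lemma success_of_good (R : realType) n m tau (B : alg R n) f eps u0
  (streams : 'I_tau -> (m.-1).-tuple (update n)) strat (rho : seed B) :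
  order_invariant m B ->
  (forall ptr, (\sum_i ptr i < m)%N ->
     approx eps (f (freq (sc u0 streams ptr))) (out (run rho (sc u0 streams ptr)))) ->
  game_success f eps (transcript u0 streams strat rho).
Proof.
move=> oi hG.
have sc0 : sc u0 streams (fun _ => 0%N) = [:: u0].
  by rewrite /sc; congr (_ :: _); elim: (enum _) => //.
rewrite /game_success /transcript.
destruct m as [|m']; first by [].
apply/allP => j; rewrite mem_iota add0n /= => hj.
case: j hj => [_|j hj].
  apply: (Qp_ok oi hG); rewrite /Qp /= take0; split; first by [].
  exists (fun _ => 0%N); rewrite sc0; split => //.
  by rewrite big1.
rewrite /=.
have := @play_inv R n m'.+1 tau B u0 streams strat rho m' (upd (init rho) u0) (fun _ => 0%N)
   [:: out (upd (init rho) u0)] [:: u0] erefl.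
rewrite sc0 big1 // add0n => /(_ (perm_refl _) (ltnSn _) j hj) hq.
exact: (Qp_ok oi hG hq).
Qed.

Lemma card_bigcup_le (I T : finType) (P : pred I) (F : I -> {set T}) :
  (#|\bigcup_(i | P i) F i| <= \sum_(i | P i) #|F i|)%N.
Proof.
elim/big_rec2: _ => [|i k U _ le]; first by rewrite cards0.
by rewrite (leq_trans (leq_card_setU _ _).1) ?leq_add2l.
Qed.

Lemma seed_pos (R : realType) n m f (eps d : R) (B : alg R n) :
  oblivious_correct m f eps d B -> d < 1 -> (0 < #|seed B|)%N.
Proof.
move=> oc d1; move: (oc [::] (leq0n m)); rewrite /Pr.
case: (posnP #|seed B|) => [->|//]; rewrite invr0 mulr0 subr_le0 => h.
by move: (lt_le_trans d1 h); rewrite ltxx.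
Qed.

Lemma fail_bound (R : realType) n m f eps (d : R) (B : alg R n) s :
  oblivious_correct m f eps d B -> (size s <= m)%N ->
  #|[set rho : seed B | ~~ approx eps (f (freq s)) (out (run rho s))]|%:R
   <= d * #|seed B|%:R.
Proof.
move=> oc hs.
have := oc s hs; rewrite /Pr.
set G := [set rho | _].
have -> : [set rho : seed B | ~~ approx eps (f (freq s)) (out (run rho s))] = ~: G.
  by apply/setP => r; rewrite !inE.
have hC := cardsC G.
case hN: (0 < #|seed B|)%N; last first.
  have h0 : #|seed B| = 0%N by lia.
  have h1 : #|~: G| = 0%N by lia.
  by rewrite h1 h0 mulr0.
have hN' : (0 : R) < #|seed B|%:R by rewrite ltr0n.
rewrite ler_pdivlMr // => h.
have -> : #|~: G| = (#|seed B| - #|G|)%N by lia.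
rewrite natrB; last by lia.
move: h; rewrite mulrBl mul1r; lra.
Qed.

Lemma robust_gen (R : realType) n m tau f eps (B : alg R n) (d delta : R) :
  order_invariant m B -> oblivious_correct m f eps d B -> d < 1 ->
  m%:R ^+ tau * d <= delta -> robust m tau f eps delta B.
Proof.
move=> oi oc d1 hd u0 streams strat.
have hN := seed_pos oc d1.
have hN' : (0 : R) < #|seed B|%:R by rewrite ltr0n.
have d0 : 0 <= d.
  have := @fail_bound _ _ _ _ _ _ _ [::] oc (leq0n m); rewrite -(pmulr_lge0 _ hN').
  by apply: le_trans.
pose Fl (c : {ffun 'I_tau -> 'I_m}) : {set seed B} :=
  [set rho | (\sum_i (c i : nat) < m)%N && ~~ approx eps (f (freq (sc u0 streams (fun i => c i))))
                 (out (run rho (sc u0 streams (fun i => c i))))].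
have hFl c : #|Fl c|%:R <= d * #|seed B|%:R.
  case hc: (\sum_i (c i : nat) < m)%N.
    have -> : Fl c = [set rho | ~~ approx eps (f (freq (sc u0 streams (fun i => c i))))
                 (out (run rho (sc u0 streams (fun i => c i))))].
      by apply/setP => r; rewrite !inE hc.
    by apply: fail_bound oc _; rewrite size_sc.
  have -> : Fl c = set0 by apply/setP => r; rewrite !inE hc.
  by rewrite cards0 mulr_ge0.
pose U := \bigcup_c Fl c.
have hsub : ~: U \subset [set rho | game_success f eps (transcript u0 streams strat rho)].
  apply/subsetP => r; rewrite !inE => hr; apply: success_of_good oi _ => ptr hp.
  have hi : forall i, (ptr i < m)%N.
    by move=> i; apply: leq_ltn_trans hp; rewrite (bigD1 i) //= leq_addr.
  pose c := [ffun i => Ordinal (hi i)].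
  have e : sc u0 streams (fun i => c i) = sc u0 streams ptr.
    by apply: sc_ext => i; rewrite ffunE.
  have es : (\sum_i (c i : nat) = \sum_i ptr i)%N by apply: eq_bigr => i _; rewrite ffunE.
  apply/negPn; apply: contra hr => ha; apply/bigcupP; exists c => //.
  by rewrite inE e es hp.
have hU := card_bigcup_le predT Fl.
have hC : (#|U| + #|~: U|)%N = #|seed B| := cardsC U.
have hS := subset_leq_card hsub.
rewrite /Pr ler_pdivlMr //.
have hU' : #|U|%:R <= m%:R ^+ tau * d * #|seed B|%:R :> R.
  apply: (le_trans (y := (\sum_c #|Fl c|)%:R)); first by rewrite ler_nat; exact: hU.
  rewrite natr_sum; apply: le_trans; first by apply: ler_sum => c _; exact: hFl c.
  by rewrite sumr_const card_ffun !card_ord -(mulr_natr (d * #|seed B|%:R) (m ^ tau)) natrX mulrC mulrA.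
have hU2 : m%:R ^+ tau * d * #|seed B|%:R <= delta * #|seed B|%:R :> R.
  by rewrite ler_pM2r.
have h3 : (#|seed B| - #|U| <= #|[set rho : seed B | game_success f eps (transcript u0 streams strat rho)]|)%N by lia.
have h4 : (#|U| <= #|seed B|)%N by lia.
move: h3; rewrite -(ler_nat R) natrB // => h3.
rewrite mulrBl mul1r; lra.
Qed.

Definition qual (R : realType) (k : nat) (y : 'I_k -> R) (i : 'I_k) : bool :=
  (k < 2 * #|[pred j | (y j <= y i)%R]|)%N.

Definition comb (R : realType) k (y : 'I_k -> R) : R :=
  if [pick i | qual y i && [forall j, qual y j ==> (y i <= y j)]] is Some i then y i else 0.

Lemma comb_ok (R : realType) k (y : 'I_k -> R) e x :
  (k < 2 * #|[pred i | approx e x (y i)]|)%N -> approx e x (comb y).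
Proof.
move=> hk.
set Gd := [pred i | approx e x (y i)] in hk.
have : (0 < #|Gd|)%N by lia.
case/card_gt0P => g0 hg0.
have r1 : reflexive (fun a b : R => b <= a) by move=> a /=.
have t1 : transitive (fun a b : R => b <= a) by move=> a b c /= h1 h2; apply: le_trans h1.
have o1 : total (fun a b : R => b <= a) by move=> a b /=; rewrite orbC le_total.
case: (extremumP y r1 t1 o1 hg0) => g hg hmax.
have qg : qual y g.
  rewrite /qual; apply: leq_trans hk _; rewrite leq_mul2l /=.
  by apply: subset_leq_card; apply/subsetP => j hj; rewrite inE; exact: hmax.
have r2 : reflexive (fun a b : R => a <= b) by move=> a /=.
have t2 : transitive (fun a b : R => a <= b) by move=> a b c /= h1 h2; apply: le_trans h2.
have o2 : total (fun a b : R => a <= b) by move=> a b /=; rewrite le_total.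
rewrite /comb; case: pickP => [i /andP [qi /forallP hi] | none]; last first.
  case: (extremumP y r2 t2 o2 (P := qual y) qg) => i qi hmin.
  move: (none i); rewrite qi /=; move/negP; case; apply/forallP => j.
  by apply/implyP => qj; exact: hmin.
have le1 : y i <= y g by move: (hi g); rewrite qg.
move: hg; rewrite /Gd /= /approx => /andP [hg1 hg2].
apply/andP; split; last by apply: le_lt_trans hg2.
rewrite leNgt; apply/negP => hlt.
have hsub : [pred j | y j <= y i] \subset [predC Gd].
  apply/subsetP => j; rewrite !inE /approx => hj; apply/negP => /andP [hx _].
  by move: (le_lt_trans (le_trans hx hj) hlt); rewrite ltxx.
have := subset_leq_card hsub.
have hc := cardC Gd; rewrite card_ord in hc.
move: qi; rewrite /qual => qi.
move=> h; move: (leq_trans qi (leq_mul (leqnn 2) h)) hk hc. move: #|Gd| #|[predC Gd]| => a b; lia.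
Qed.

Definition ampl (R : realType) n (A : alg R n) (k : nat) : alg R n :=
  @Alg R n {ffun 'I_k -> seed A} {ffun 'I_k -> state A}
    (fun rho => [ffun i => init (rho i)])
    (fun s u => [ffun i => upd (s i) u])
    (fun s => comb (fun i => out (s i))).

Lemma run_ampl (R : realType) n (A : alg R n) k (rho : seed (ampl A k)) s :
  run rho s = [ffun i => run (rho i) s] :> state (ampl A k).
Proof.
rewrite /run.
suff h : forall st : state (ampl A k),
    foldl (@upd R n (ampl A k)) st s = [ffun i => foldl (@upd R n A) (st i) s].
  by rewrite h; apply/ffunP => i; rewrite !ffunE /=.
elim: s => [|u s IH] st /=; first by apply/ffunP => i; rewrite ffunE.
by rewrite IH; apply/ffunP => i; rewrite !ffunE.
Qed.

Lemma oi_ampl (R : realType) n m (A : alg R n) k :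
  order_invariant m A -> order_invariant m (ampl A k).
Proof.
move=> oi rho s1 s2 h1 h2 hf; rewrite !run_ampl; apply/ffunP => i; rewrite !ffunE.
exact: oi.
Qed.

Lemma mem_bits_ampl (R : realType) n (A : alg R n) k :
  (mem_bits (ampl A k) <= k * mem_bits A)%N.
Proof.
rewrite /mem_bits /= card_ffun card_ord.
apply: up_log_min => //; rewrite mulnC expnM.
case: k => [|k]; first by rewrite !expn0.
by rewrite leq_exp2r // up_logP.
Qed.

Lemma fam_card (T : finType) k (S : {set 'I_k}) (F : {set T}) :
  #|[set rho : {ffun 'I_k -> T} | [forall i, (i \in S) ==> (rho i \in F)]]| =
  (\prod_(i < k) (if i \in S then #|F| else #|T|))%N.
Proof.
have := @card_family 'I_k (fun _ => T) (fun i => [pred r | (i \in S) ==> (r \in F)]).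
rewrite foldrE big_map big_enum /= => e.
have -> : #|[set rho : {ffun 'I_k -> T} | [forall i, (i \in S) ==> (rho i \in F)]]| =
  #|family (fun i : 'I_k => [pred r | (i \in S) ==> (r \in F)])|.
  apply: eq_card => rho; rewrite inE; apply/forallP/familyP => h i; exact: h i.
rewrite e; apply: eq_bigr => i _; case: (i \in S).
  by apply: eq_card => r; rewrite !inE.
by apply: eq_card => r; rewrite !inE.
Qed.

Lemma count_bad (R : realType) (T : finType) (F : {set T}) k t :
  #|F|%:R <= 10^-1 * #|T|%:R :> R ->
  #|[set rho : {ffun 'I_k -> T} | (t <= #|[set i | rho i \in F]|)%N]|%:R
    <= 2%:R ^+ k * (10^-1) ^+ t * #|T|%:R ^+ k :> R.
Proof.
move=> hF.
set a : R := 10^-1.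
have a0 : 0 <= a by rewrite /a invr_ge0 ler0n.
have a1 : a <= 1 by rewrite /a invf_le1 // ?ler1n ?ltr0n.
pose fam (S : {set 'I_k}) := [set rho : {ffun 'I_k -> T} | [forall i, (i \in S) ==> (rho i \in F)]].
have hsub : [set rho : {ffun 'I_k -> T} | (t <= #|[set i | rho i \in F]|)%N]
   \subset \bigcup_(S : {set 'I_k} | (t <= #|S|)%N) fam S.
  apply/subsetP => rho; rewrite inE => h; apply/bigcupP; exists [set i | rho i \in F] => //.
  by rewrite inE; apply/forallP => i; apply/implyP; rewrite inE.
have hfam (S : {set 'I_k}) : (t <= #|S|)%N -> #|fam S|%:R <= a ^+ t * #|T|%:R ^+ k.
  move=> hS; rewrite fam_card natr_prod.
  apply: (le_trans (y := \prod_(i < k) (#|T|%:R * (if i \in S then a else 1)))).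
    apply: ler_prod => i _; case: (i \in S); rewrite ?mulr1 ?ler0n //=.
    by rewrite mulrC.
  rewrite big_split /= prodr_const card_ord mulrC; apply: ler_wpM2r; first by rewrite exprn_ge0.
  rewrite -big_mkcond /= prodr_const.
  exact: ler_wiXn2l.
apply: (le_trans (y := (\sum_(S : {set 'I_k} | (t <= #|S|)%N) #|fam S|)%:R)).
  by rewrite ler_nat; exact: (leq_trans (subset_leq_card hsub) (card_bigcup_le _ _)).
rewrite natr_sum.
apply: (le_trans (y := \sum_(S : {set 'I_k}) a ^+ t * #|T|%:R ^+ k)).
  rewrite [X in _ <= X](bigID (fun S : {set 'I_k} => (t <= #|S|)%N)) /=.
  rewrite -[X in X <= _]addr0; apply: lerD.
    by apply: ler_sum => S; exact: hfam.
  by apply: sumr_ge0 => S _; rewrite mulr_ge0 ?exprn_ge0 ?ler0n.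
have hc : #|{set 'I_k}| = (2 ^ k)%N.
  by rewrite -(cardsT {set 'I_k}) -powersetT card_powerset cardsT card_ord.
by rewrite sumr_const hc -(mulr_natl (a ^+ t * #|T|%:R ^+ k) (2 ^ k)) natrX mulrA.
Qed.

Lemma oc_ampl (R : realType) n m f e (A : alg R n) t (d : R) :
  oblivious_correct m f e (10^-1) A -> (0 < t)%N -> (2%:R / 5%:R) ^+ t <= d ->
  oblivious_correct m f e d (ampl A (2 * t)).
Proof.
move=> oc ht hd s hs.
have h10 : (10^-1 : R) < 1 by rewrite invf_lt1 ?ltr0n ?ltr1n.
have hN := seed_pos oc h10.
set x := f (freq s).
set F := [set r : seed A | ~~ approx e x (out (run r s))].
have hF : #|F|%:R <= 10^-1 * #|seed A|%:R := fail_bound oc hs.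
have hb := count_bad (2 * t) t hF.
set Bd := [set rho : {ffun 'I_(2 * t) -> seed A} | _] in hb.
set Gs := [set rho : seed (ampl A (2 * t)) | approx e x (out (run rho s))].
have hsub : ~: Bd \subset Gs.
  apply/subsetP => rho; rewrite !inE -ltnNge => hlt.
  rewrite run_ampl /=; apply: comb_ok.
  set S := [set i | rho i \in F] in hlt.
  have hc : (#|S| + #|~: S|)%N = (2 * t)%N by rewrite cardsC card_ord.
  have -> : #|[pred i | approx e x (out ([ffun i => run (rho i) s] i))]| = #|~: S|.
    by apply: eq_card => i; rewrite !inE ffunE negbK.
  move: hlt hc; move: #|S| #|~: S| => a b; lia.
have hNk : #|seed (ampl A (2 * t))| = (#|seed A| ^ (2 * t))%N by rewrite /= card_ffun card_ord.
have hC : (#|Bd| + #|~: Bd|)%N = #|seed (ampl A (2 * t))| := cardsC Bd.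
have hS := subset_leq_card hsub.
have hpos : (0 : R) < #|seed (ampl A (2 * t))|%:R by rewrite hNk ltr0n expn_gt0 hN.
rewrite /Pr ler_pdivlMr //.
have e1 : 2%:R ^+ (2 * t) * (10^-1) ^+ t = (2%:R / 5%:R) ^+ t :> R.
  by rewrite exprM -exprMn; congr (_ ^+ _); field.
rewrite e1 in hb.
have hb2 : #|Bd|%:R <= d * #|seed (ampl A (2 * t))|%:R :> R.
  apply: le_trans hb _; rewrite hNk natrX; apply: ler_wpM2r => //.
  by rewrite exprn_ge0 ?ler0n.
have h3 : (#|seed (ampl A (2 * t))| - #|Bd| <= #|Gs|)%N by rewrite -hC addKn.
have h4 : (#|Bd| <= #|seed (ampl A (2 * t))|)%N by rewrite -hC leq_addr.
move: h3; rewrite -(ler_nat R) natrB // => h3.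
rewrite mulrBl mul1r; lra.
Qed.

Lemma ln2_ge (R : realType) : 2^-1 <= ln (2%:R : R).
Proof.
have h := @le_ln1Dx R (- 2^-1) ltac:(rewrite ltrN2 invf_lt1 ?ltr0n ?ltr1n //).
have e : 1 + - 2^-1 = (2%:R : R)^-1 by field.
rewrite e lnV ?posrE ?ltr0n // in h.
by rewrite -lerN2.
Qed.

Definition triv (R : realType) n : alg R n :=
  @Alg R n unit unit (fun _ => tt) (fun _ _ => tt) (fun _ => 0).

Lemma triv_bits (R : realType) n : mem_bits (triv R n) = 0%N.
Proof. by rewrite /mem_bits /= card_unit. Qed.

Lemma triv_robust (R : realType) n tau f (eps delta : R) :
  0 < delta -> robust 0 tau f eps delta (triv R n).
Proof.
move=> hd u0 streams strat; rewrite /Pr.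
have -> : [set rho : seed (triv R n) | game_success f eps (transcript u0 streams strat rho)] = setT.
  by apply/setP => r; rewrite !inE.
rewrite cardsT /= card_unit divr1; lra.
Qed.

Theorem lemma6p3 :
  exists C : nat,
  forall (R : realType) (n m : nat) (alpha : nat) (f : {ffun 'I_n -> int} -> R)
         (tau : nat) (A : R -> R -> alg R n) (M : R -> R -> nat),
    (2 <= alpha)%N ->
    (forall v, f v = 0 \/ (1 <= f v /\ f v <= alpha%:R)) ->
    (0 < tau)%N ->
    (forall eps delta : R, 0 < eps < 1 -> 0 < delta < 1 ->
        order_invariant m (A eps delta) /\
        (mem_bits (A eps delta) <= M eps delta)%N /\
        oblivious_correct m f eps delta (A eps delta)) ->
    forall eps delta : R, 0 < eps < 1 -> 0 < delta < 1 ->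
      (exists B : alg R n,
          (mem_bits B <= M eps (delta / (m%:R ^+ tau)))%N /\
          robust m tau f eps delta B) /\
      (exists B : alg R n,
          (mem_bits B)%:R <= C%:R * (tau%:R * ln (m%:R) + ln (delta^-1) + 1)
                                * (M eps (10^-1))%:R /\
          robust m tau f eps delta B).
Proof.
exists 4%N => R n m alpha f tau A M _ _ htau hA eps delta heps hdel.
case/andP: hdel => d0 d1.
have hl : 0 <= ln (delta^-1).
  by apply: ln_ge0; rewrite invf_ge1 // ltW.
case: (posnP m) => [m0|mpos].
  subst m; split; exists (triv R n); rewrite triv_bits; split => //;
    try exact: triv_robust.
  rewrite ln0 // mulr0 add0r; apply: mulr_ge0; last by rewrite ler0n.
  by apply: mulr_ge0; rewrite ?ler0n // addr_ge0.
have mR : (1 : R) <= m%:R by rewrite ler1n.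
have mX : (1 : R) <= m%:R ^+ tau by rewrite exprn_ege1.
have mX0 : (0 : R) < m%:R ^+ tau by apply: lt_le_trans mX.
set d := delta / m%:R ^+ tau.
have dpos : 0 < d by rewrite /d divr_gt0.
have dle : d <= delta by rewrite /d ler_pdivrMr // ler_peMr // ltW.
have dlt1 : d < 1 by apply: le_lt_trans d1.
have hmd : m%:R ^+ tau * d <= delta by rewrite /d mulrC divfK ?gt_eqF.
split.
  have [oi [bits oc]] := hA eps d heps (introT andP (conj dpos dlt1)).
  exists (A eps d); split => //.
  exact: robust_gen oi oc dlt1 hmd.
have h10 : 0 < (10^-1 : R) < 1 by rewrite invr_gt0 ltr0n invf_lt1 ?ltr0n ?ltr1n.
have [oi [bits oc]] := hA eps (10^-1) heps h10.
set L := tau%:R * ln (m%:R : R) + ln (delta^-1).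
have L0 : 0 <= L by rewrite /L addr_ge0 // mulr_ge0 ?ler0n ?ln_ge0.
set t := (Num.truncn (2 * L)).+1.
have ht : (0 < t)%N by [].
have htr : (t%:R : R) <= 2 * L + 1.
  rewrite /t -addn1 natrD lerD2r truncn_le; by rewrite mulr_ge0.
have htg : 2 * L < (t%:R : R) by exact: truncnS_gt.
have hX : m%:R ^+ tau / delta <= (2%:R : R) ^+ t.
  have p1 : m%:R ^+ tau / delta \is Num.pos by rewrite posrE divr_gt0.
  have p2 : (2%:R : R) ^+ t \is Num.pos by rewrite posrE exprn_gt0 ?ltr0n.
  rewrite -(ler_ln p1 p2) lnM ?posrE ?invr_gt0 // lnXn ?ltr0n // lnXn ?ltr0n //.
  have eL : ln (m%:R : R) *+ tau + ln delta^-1 = L by rewrite /L mulr_natl.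
  rewrite eL -(mulr_natr (ln (2%:R : R)) t).
  have l2 := ln2_ge R.
  apply: (le_trans (y := 2^-1 * t%:R)).
    rewrite mulrC ler_pdivlMr ?ltr0n //; lra.
  by rewrite ler_wpM2r ?ler0n.
have hdt : (2%:R / 5%:R : R) ^+ t <= d.
  apply: (le_trans (y := ((2%:R : R) ^+ t)^-1)).
    rewrite -exprVn lerXn2r ?nnegrE ?invr_ge0 ?divr_ge0 ?ler0n //.
    by rewrite ler_pdivrMr ?ltr0n // mulrC ler_pdivlMr ?ltr0n // -natrM ler_nat.
  have -> : d = (m%:R ^+ tau / delta)^-1 by rewrite /d invfM invrK mulrC.
  by rewrite lef_pV2 ?posrE ?exprn_gt0 ?ltr0n ?divr_gt0.
exists (ampl (A eps (10^-1)) (2 * t)); split; last first.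
  exact: robust_gen (oi_ampl (k := (2 * t)%N) oi) (oc_ampl oc ht hdt) dlt1 hmd.
apply: (le_trans (y := ((2 * t) * M eps (10^-1))%:R)).
  rewrite ler_nat; apply: leq_trans (mem_bits_ampl _ _) _.
  by rewrite leq_mul2l bits orbT.
rewrite natrM; apply: ler_wpM2r; first exact: ler0n.
rewrite natrM.
have e : forall (a b : R), a <= 2 * b + 1 -> 2 * a <= 4 * (b + 1).
  by clear; move=> a b h; lra.
exact: e _ _ htr.
Qed.
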